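(* Let $C\subset X$ be a strictly convex cone and $T:X\to Y$ a linear mapping between finite-dimensional Euclidean spaces such that $\{0\}\neq\operatorname{Ker}T\cap C\subset\operatorname{bd}C$. Then $T(C)$ is a pointed cone in $Y$.
   Context: A cone $D$ is pointed if $D\cap(-D)=\{0\}$. A cone is regular if pointed, closed, convex, with nonempty interior; a regular cone is strictly convex if every face other than the cone itself and $\{0\}$ has dimension one (a face being a convex $\mathcal F\subset C$ such that $x,y\in C$, $\lambda x+(1-\lambda)y\in\mathcal F$ for some $0<\lambda<1$ implies $x,y\in\mathcal F$). *)

(* Defs.v *)
(* Euclidean space R^n is 'rV[R]_n,
   with its canonical (product = Euclidean) topology. *)
From HB Require Import structures.
From mathcomp Require Import all_boot all_order all_algebra.
From mathcomp Require Import all_classical all_reals all_analysis.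
Set Implicit Arguments. Unset Strict Implicit. Unset Printing Implicit Defensive.
Import Order.TTheory GRing.Theory Num.Theory.
Import numFieldNormedType.Exports.
Local Open Scope classical_set_scope.
Local Open Scope ring_scope.

Section Cones.
Variables (R : realType) (n : nat).
Implicit Types (D F : set 'rV[R]_n).

Definition is_cone D := forall x, D x -> forall l : R, 0 <= l -> D (l *: x).

Definition pointed D := D `&` [set - x | x in D] = [set 0].

Definition convex_set D :=
  forall x y, D x -> D y -> forall l : R, 0 <= l <= 1 -> D (l *: x + (1 - l) *: y).

Definition regular_cone D :=
  [/\ is_cone D, pointed D, closed D, convex_set D & interior D !=set0].

Definition bd D := closure D `\` interior D.

Definition is_face D F :=
  F `<=` D /\ convex_set F /\
  forall x y l, D x -> D y -> 0 < l < 1 -> F (l *: x + (1 - l) *: y) -> F x /\ F y.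

Definition span_dim D (k : nat) :=
  (exists M : 'M[R]_(k, n), (forall i, D (row i M)) /\ \rank M = k) /\
  (forall m (M : 'M[R]_(m, n)), (forall i, D (row i M)) -> (\rank M <= k)%N).

(* dimension of a (nonempty) convex set = dimension of its affine hull
   = dimension of the span of its differences *)
Definition aff_dim F (k : nat) := span_dim [set x - y | x in F & y in F] k.

Definition strictly_convex_cone D :=
  regular_cone D /\
  forall F, is_face D F -> F !=set0 -> F <> D -> F <> [set 0] -> aff_dim F 1.

End Cones.

(* Main.v *)
Require Import Defs.
From HB Require Import structures.
From mathcomp Require Import all_boot all_order all_algebra.
From mathcomp Require Import all_classical all_reals all_analysis.
From mathcomp.algebra_tactics Require Import ring lra.
Import Order.TTheory GRing.Theory Num.Theory.
Import numFieldNormedType.Exports.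
Local Open Scope classical_set_scope.
Local Open Scope ring_scope.

Lemma dep (F : fieldType) n (x z : 'rV[F]_n) : (\rank (col_mx x z) <= 1)%N ->
  (exists a, x = a *: z) \/ (exists a, z = a *: x).
Proof.
move=> H.
have : ~~ row_free (col_mx x z) by rewrite /row_free; apply/negP => /eqP E; rewrite E in H.
have E0 : row' (0 : 'I_2) (col_mx x z) = z.
  apply/matrixP => a b; rewrite mxE.
  have -> : lift 0 a = rshift 1 a by apply/val_inj.
  exact: (col_mxEd x z a b).
have E1 : row' (1 : 'I_2) (col_mx x z) = x.
  apply/matrixP => a b; rewrite mxE.
  have -> : lift 1 a = lshift 1 a by apply/val_inj; rewrite /= ord1.
  exact: (col_mxEu x z a b).
have F0 : row 0 (col_mx x z) = x.
  apply/matrixP => a b; rewrite mxE.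
  have -> : (0 : 'I_2) = lshift 1 a by apply/val_inj; rewrite /= ord1.
  exact: (col_mxEu x z a b).
have F1 : row 1 (col_mx x z) = z.
  apply/matrixP => a b; rewrite mxE.
  have -> : (1 : 'I_2) = rshift 1 a by apply/val_inj; rewrite /= ord1.
  exact: (col_mxEd x z a b).
case/row_freePn => i.
case: i => [[|[|//]] Hi].
- rewrite (_ : Ordinal Hi = 0); last exact/val_inj.
  by rewrite E0 F0 => /sub_rVP; left.
- rewrite (_ : Ordinal Hi = 1); last exact/val_inj.
  by rewrite E1 F1 => /sub_rVP; right.
Qed.

Lemma rows2 (F : fieldType) n (x z : 'rV[F]_n) (i : 'I_(1+1)) :
  row i (col_mx x z) = x \/ row i (col_mx x z) = z.
Proof.
case: i => [[|[|//]] Hi].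
- left; apply/matrixP => a b; rewrite mxE.
  have -> : Ordinal Hi = lshift 1 a by apply/val_inj; rewrite /= ord1.
  exact: (col_mxEu x z a b).
- right; apply/matrixP => a b; rewrite mxE.
  have -> : Ordinal Hi = rshift 1 a by apply/val_inj; rewrite /= ord1.
  exact: (col_mxEd x z a b).
Qed.

Lemma conv_id (K : comRingType) (V : lmodType K) (w a b : V) (m l : K) :
  w - m *: (l *: a + (1 - l) *: b) = l *: (w - m *: a) + (1 - l) *: (w - m *: b).
Proof.
rewrite !scalerBr !scalerA scalerDr !scalerA opprD [RHS]addrACA -scalerDl subrKC scale1r.
by rewrite [m * l]mulrC [m * (1 - l)]mulrC.
Qed.

Theorem lemma3 (R : realType) (n m : nat) (C : set 'rV[R]_n)
    (T : {linear 'rV[R]_n -> 'rV[R]_m}) :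
  strictly_convex_cone C ->
  [set x | T x = 0] `&` C <> [set 0] ->
  [set x | T x = 0] `&` C `<=` bd C ->
  is_cone (T @` C) /\ pointed (T @` C).
Proof.
move=> [[Ccone Cpt Ccl Cconv Cint] Cface] _ Kbd.
have [p0 Hp0] := Cint.
have Cp0 : C p0 := interior_subset Hp0.
have C0 : C 0 by have := Ccone _ Cp0 0 (lexx 0); rewrite scale0r.
have Cadd : forall a b, C a -> C b -> C (a + b).
  move=> a b Ca Cb.
  have h : 0 <= (2^-1 : R) <= 1.
    by apply/andP; split; [rewrite invr_ge0 ler0n | rewrite invf_le1 ?ler1n ?ltr0n].
  have := Ccone _ (Cconv a b Ca Cb _ h) 2 (ler0n _ _).
  have -> : (1 - 2^-1 : R) = 2^-1.
    by field.
  by rewrite -scalerDr scalerA mulfV ?pnatr_eq0 // scale1r.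
split.
  move=> _ [x Cx <-] l l0; exists (l *: x); [exact: Ccone | by rewrite linearZ].
apply/seteqP; split; last first.
  move=> y ->; split; first by exists 0 => //; rewrite linear0.
  by exists 0; [exists 0 => //; rewrite linear0 | rewrite oppr0].
move=> y [[x Cx Exy] [yu [z Cz Ezu] Euy]].
rewrite /= -Exy.
have TxTz : T x = - T z by rewrite Exy -Euy Ezu.
set w := x + z.
have Cw : C w by exact: Cadd.
have Kw : T w = 0 by rewrite /w linearD TxTz addNr.
have bdw : bd C w := Kbd w (conj Kw Cw).
pose F := [set u | C u /\ exists2 t, 0 < t & C (w - t *: u)].
have Fx : F x by split => //; exists 1 => //; rewrite scale1r /w addrAC subrr add0r.
have Fz : F z by split => //; exists 1 => //; rewrite scale1r /w addrK.
have down : forall u t s, 0 < s <= t -> C (w - t *: u) -> C (w - s *: u).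
  move=> u t s /andP[s0 st] Ht.
  have t0 : 0 < t by apply: lt_le_trans st.
  have h : 0 <= s / t <= 1.
    by apply/andP; split; [rewrite divr_ge0 // ltW | rewrite ler_pdivrMr // mul1r].
  have := Cconv _ _ Ht Cw _ h.
  by rewrite scalerBr scalerA divfK ?gt_eqF // scalerBl scale1r addrC addrA subrK.
have faceF : is_face C F.
  split; first by move=> u [].
  split.
    move=> a b [Ca [ta ta0 Ha]] [Cb [tb tb0 Hb]] l hl.
    split; first exact: Cconv.
    set mt := Num.min ta tb.
    have mt0 : 0 < mt by rewrite lt_min ta0.
    have mta : 0 < mt <= ta by rewrite mt0 ge_min lexx.
    have mtb : 0 < mt <= tb by rewrite mt0 ge_min lexx orbT.
    have Ha' := down _ _ mt mta Ha; have Hb' := down _ _ mt mtb Hb.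
    exists mt => //.
    have := Cconv _ _ Ha' Hb' l hl.
    suff -> : w - mt *: (l*:a + (1-l)*:b) = l*:(w - mt*:a) + (1-l)*:(w - mt*:b) by [].
    exact: conv_id.
  move=> a b l Ca Cb /andP[l0 l1] [_ [t t0 Ht]]; split.
  - split=> //; exists (t * l); first exact: mulr_gt0.
    have := Cadd _ _ Ht (Ccone _ Cb (t * (1 - l)) _).
    suff -> : w - (t * l)*:a = (w - t*:(l*:a + (1-l)*:b)) + (t * (1 - l))*:b.
      by move=> H; apply: H; apply: mulr_ge0; [exact: ltW | by rewrite subr_ge0 ltW].
    by rewrite scalerDr !scalerA opprD addrA subrK.
  - split=> //; exists (t * (1 - l)); first by rewrite mulr_gt0 // subr_gt0.
    have := Cadd _ _ Ht (Ccone _ Ca (t * l) _).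
    suff -> : w - (t * (1 - l))*:b = (w - t*:(l*:a + (1-l)*:b)) + (t * l)*:a.
      by move=> H; apply: H; apply: mulr_ge0; exact: ltW.
    by rewrite scalerDr !scalerA opprD addrA addrAC subrK.
have F0 : F 0 by split => //; exists 1 => //; rewrite scaler0 subr0.
have FneC : F <> C.
  move=> FC; have : F p0 by rewrite FC.
  case=> _ [t t0 Ht].
  have [_ nint] := bdw; apply: nint; rewrite /interior /=.
  pose g := fun u : 'rV[R]_n => (p0 + t^-1 *: (u - w) : 'rV[R]_n).
  have gc : g @ w --> p0.
    have -> : p0 = p0 + t^-1 *: (w - w) :> 'rV[R]_n by rewrite subrr scaler0 addr0.
    have h1 : (fun u : 'rV[R]_n => u - w) @ w --> w - w.
      exact: (cvgB (F := nbhs w) (f := id) (g := fun=> w) cvg_id (cvg_cst w)).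
    have h2 : (fun u : 'rV[R]_n => t^-1 *: (u - w)) @ w --> t^-1 *: (w - w).
      exact: (cvgZ (F := nbhs w) (s := fun=> t^-1) (f := fun u => u - w) (cvg_cst _) h1).
    exact: (cvgD (F := nbhs w) (f := fun=> p0) (g := fun u => t^-1 *: (u - w)) (cvg_cst _) h2).
  have H : nbhs w (g @^-1` C) := gc C Hp0.
  apply: filterS H => v /= Cg.
  have := Cadd _ _ Ht (Ccone _ Cg t (ltW t0)).
  rewrite scalerDr scalerA mulfV ?gt_eqF // scale1r.
  by rewrite addrA subrK subrKC.
case: (pselect (F = [set 0])) => [F0e | Fne0].
  have : F x by [].
  by rewrite F0e => ->; rewrite linear0.
have [_ dimF] := Cface F faceF (ex_intro _ 0 F0) FneC Fne0.
have rk := dimF _ (col_mx x z).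
have : (\rank (col_mx x z) <= 1)%N.
  apply: rk => i; case: (rows2 _ _ x z i) => ->.
  - by exists x => //; exists 0 => //; rewrite subr0.
  - by exists z => //; exists 0 => //; rewrite subr0.
case/dep => [[a xa] | [a za]].
- have : (a + 1) *: T z = 0 by rewrite scalerDl scale1r -linearZ -xa TxTz addNr.
  move/eqP; rewrite scaler_eq0 => /orP[|/eqP Tz0]; last by rewrite TxTz Tz0 oppr0.
  rewrite addr_eq0 => /eqP an1.
  have : (C `&` [set - u | u in C]) x by split => //; exists z => //; rewrite xa an1 scaleN1r.
  by rewrite Cpt => ->; rewrite linear0.
- have : (1 + a) *: T x = 0.
    by rewrite scalerDl scale1r -linearZ -za TxTz addNr.
  move/eqP; rewrite scaler_eq0 => /orP[|/eqP //].
  rewrite addrC addr_eq0 => /eqP an1.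
  have : (C `&` [set - u | u in C]) x by split => //; exists z => //; rewrite za an1 scaleN1r opprK.
  by rewrite Cpt => ->; rewrite linear0.
Qed.
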